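(* Let $m$ be a positive integer and $k$ a positive integer. If $\nu_2(m)$ is odd and $k$ is even, then $S_k(m)$ is empty.
   Context: For a positive integer $x$, $\nu_2(x)$ denotes the largest integer $e$ such that $2^e$ divides $x$. For a positive integer $m$, consider positive rational solutions $(x,y)$ of $x^y = y^{mx}$ with $x \neq 1$. For such a solution, $r = \log y / \log x$ is a positive rational number (so $y = x^r$); write $r = a/b$ with $a,b$ positive coprime integers. For an integer $k \ge 1$, $S_k(m)$ denotes the set of such solutions $(x,y)$ for which $|a-b| = k$. *)

(* Defs.v *)
From HB Require Import structures.
From mathcomp Require Import all_boot all_order all_algebra.
From mathcomp Require Import reals exp.
Set Implicit Arguments. Unset Strict Implicit. Unset Printing Implicit Defensive.
Import Order.TTheory GRing.Theory Num.Theory.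
Local Open Scope ring_scope.

Definition is_solution (R : realType) (m : nat) (x y : rat) : Prop :=
  0 < x /\ 0 < y /\ x != 1 /\
  powR (ratr x : R) (ratr y) = powR (ratr y : R) (m%:R * ratr x).

Definition in_S (R : realType) (k m : nat) (x y : rat) : Prop :=
  is_solution R m x y /\
  exists a b : nat, (0 < a)%N /\ (0 < b)%N /\ coprime a b /\
    ln (ratr y : R) / ln (ratr x : R) = a%:R / b%:R /\
    `|(a%:Z - b%:Z)%R|%N = k.

(* Main.v *)
Require Import Defs.
From mathcomp Require Import all_boot all_order all_algebra.
From mathcomp Require Import reals exp ring.
Import Order.TTheory GRing.Theory Num.Theory.
Lemma logn2_odd a : odd a -> logn 2 a = 0%N.
Proof.
move=> oa; rewrite lognE; case: (boolP (2 %| a)) => h; last by rewrite !andbF.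
by move: h; rewrite dvdn2 oa.
Qed.

Lemma key (m a b p q : nat) : (0 < m)%N -> (0 < p)%N -> (0 < q)%N ->
  odd a -> odd b ->
  ((m * a * p) ^ b * q ^ a = p ^ a * b ^ b * q ^ b)%N -> ~~ odd (logn 2 m).
Proof.
move=> m0 p0 q0 oa ob E.
have a0 : (0 < a)%N by case: a oa {E}.
have b0 : (0 < b)%N by case: b ob {E}.
have := congr1 (logn 2) E.
rewrite !lognM ?expn_gt0 ?muln_gt0 ?m0 ?a0 ?p0 ?q0 ?b0 //. idtac.
rewrite !lognX !lognM ?m0 ?a0 ?muln_gt0 ?expn_gt0 ?m0 ?a0 ?p0 ?b0 // (logn2_odd _ oa) (logn2_odd _ ob).
move/(congr1 odd); rewrite !(oddD, oddM) oa ob /=.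
  by case: (odd (logn 2 m)); case: (odd (logn 2 p)); case: (odd (logn 2 q)).
by rewrite !expn_gt0 p0 b0.
Qed.

Local Open Scope ring_scope.

Lemma rat_to_nat (m a b : nat) (x y : rat) : 0 < x ->
  y * b%:R = m%:R * x * a%:R -> y ^+ b = x ^+ a ->
  exists p q : nat, (0 < p)%N /\ (0 < q)%N /\
   ((m * a * p) ^ b * q ^ a = p ^ a * b ^ b * q ^ b)%N.
Proof.
move=> x0 E1 E2.
have hn : (0 <= numq x) by rewrite numq_ge0 ltW.
have hd : (0 <= denq x) by rewrite ltW.
exists `|numq x|%N, `|denq x|%N; split; first by rewrite absz_gt0 numq_eq0 gt_eqF.
split; first by rewrite absz_gt0 denq_neq0.
apply/eqP; rewrite -(eqr_nat rat) !(natrM, natrX).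
rewrite !pmulrn !gez0_abs // -!pmulrn.
have xq : x = (numq x)%:~R / (denq x)%:~R by rewrite divq_num_den.
have dq : (denq x)%:~R != 0 :> rat by rewrite intr_eq0 denq_neq0.
apply/eqP.
have : (y * b%:R) ^+ b = (m%:R * x * a%:R) ^+ b by rewrite E1.
rewrite exprMn E2 => E3.
rewrite xq in E3.
move: E3; set P := (numq x)%:~R : rat; set Q := (denq x)%:~R : rat => E3.
move: E3; rewrite !exprMn !exprVn.
have qa0 : Q ^+ a != 0 by rewrite expf_neq0.
have qb0 : Q ^+ b != 0 by rewrite expf_neq0.
move: qa0 qb0.
set qa := Q ^+ a; set qb := Q ^+ b; set pa := P ^+ a; set pb := P ^+ b.
set B := b%:R ^+ b; set M := m%:R ^+ b; set A := a%:R ^+ b => qa0 qb0 E3.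
have -> : M * A * pb * qa = (M * (pb / qb) * A) * qa * qb by field.
by rewrite -E3; field.
Qed.

Theorem lemma4 (R : realType) (m k : nat) :
  (0 < m)%N -> (0 < k)%N -> odd (logn 2 m) -> ~~ odd k ->
  forall x y : rat, ~ in_S R k m x y.
Proof.
move=> m0 k0 om ek x y [[x0 [y0 [x1 E]]] [a [b [a0 [b0 [cab [Er Ek]]]]]]].
have hk : odd k = odd a (+) odd b.
  rewrite -Ek; case: (leqP b a) => h.
    by rewrite distnEl // oddB.
  by rewrite distnEr ?(ltnW h) // oddB ?(ltnW h) // addbC.
have oab : odd a && odd b.
  case oa: (odd a); case ob: (odd b) => //=.
  - by move: ek; rewrite hk oa ob.
  - by move: ek; rewrite hk oa ob.
  - have : (2 %| gcdn a b)%N by rewrite dvdn_gcd !dvdn2 oa ob.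
    by move: cab; rewrite /coprime => /eqP ->.
set X := (ratr x : R) in E Er; set Y := (ratr y : R) in E Er.
have X0 : 0 < X by rewrite ltr0q.
have Y0 : 0 < Y by rewrite ltr0q.
have lX : ln X != 0.
  rewrite ln_eq0 //; apply: contra x1 => /eqP h; apply/eqP.
  by apply: (@fmorph_inj _ _ (@ratr R)); rewrite rmorph1.
have E' := congr1 (@ln R) E; rewrite !ln_powR in E'.
have Eb : ln Y * b%:R = a%:R * ln X.
  have bn : (b%:R : R) != 0 by rewrite pnatr_eq0 -lt0n.
  by rewrite -(divfK lX (ln Y)) Er; field.
have H1 : y * b%:R = m%:R * x * a%:R.
  apply: (@fmorph_inj _ _ (@ratr R)); rewrite !rmorphM /= !ratr_nat -/X -/Y.
  apply: (mulIf lX); transitivity (Y * ln X * b%:R); first ring.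
  rewrite E' -mulrA Eb; ring.
have H2 : y ^+ b = x ^+ a.
  apply: (@fmorph_inj _ _ (@ratr R)); rewrite !rmorphXn /= -/X -/Y.
  apply: ln_inj; rewrite ?posrE ?exprn_gt0 //.
  by rewrite !lnXn // -[_ *+ b]mulr_natr -[_ *+ a]mulr_natr Eb mulrC.
have [p [q [p0 [q0 Eq]]]] := rat_to_nat _ _ _ _ _ x0 H1 H2.
case/andP: oab => oa ob.
by move: (key _ _ _ _ _ m0 p0 q0 oa ob Eq); rewrite om.
Qed.
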